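(* Let $S_1$ and $S_2$ be two disjoint sets of cells of an $n\times n$ array, each forming a Hamilton cycle. Then for any positive integers $t$ and $s$ with $s>t+2n$, the cells of $S_1\cup S_2$ can be filled with nonzero integers so that the resulting (partial) array is shiftable, has support $\{s+i,\ t+i\mid 1\le i\le 2n\}$ (each of these $4n$ absolute values occurring exactly once), and the four entries in each row and in each column sum to $0$.
   Context: Cells of an $n\times n$ array are identified with edges of $K_{n,n}$ (cell $(i,j)$ ↔ edge $\{a_i,b_j\}$); a set of cells forms a Hamilton cycle if the corresponding edge set is a single cycle of length $2n$. The support of an array is the set of absolute values of its entries. An array is shiftable if each row and each column contains the same number of positive and negative entries. *)

(* Defs.v *)
From HB Require Import structures.
From mathcomp Require Import all_boot all_order all_algebra all_fingroup.
Set Implicit Arguments. Unset Strict Implicit. Unset Printing Implicit Defensive.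
Import GRing.Theory Num.Theory.

(* Cells of an n x n array are pairs (row, column) : 'I_n * 'I_n; cell (i,j)
   corresponds to the edge {a_i, b_j} of K_{n,n}. *)
Notation cell n := ('I_n * 'I_n)%type.

(* S forms a Hamilton cycle: there are orderings sigma of the rows (a-vertices)
   and tau of the columns (b-vertices) such that the cycle is
   a_{sigma 0} b_{tau 0} a_{sigma 1} b_{tau 1} ... a_{sigma (n-1)} b_{tau (n-1)} a_{sigma 0},
   its edges being {a_{sigma k}, b_{tau k}} and {a_{sigma (k+1 mod n)}, b_{tau k}};
   the edge set must have 2n elements (a genuine cycle of length 2n). *)
Definition hamilton_cycle (n : nat) (S : {set cell n}) : Prop :=
  exists (sigma tau : {perm 'I_n}),
    S = [set (sigma k, tau k) | k : 'I_n] :|: [set (sigma (ordS k), tau k) | k : 'I_n]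
    /\ #|S| = (2 * n)%N.

(* A partial array is modelled as A : 'I_n -> 'I_n -> int, empty cells being 0. *)
Definition row_pos n (A : 'I_n -> 'I_n -> int) (i : 'I_n) := #|[set j | (0 < A i j)%R]|.
Definition row_neg n (A : 'I_n -> 'I_n -> int) (i : 'I_n) := #|[set j | (A i j < 0)%R]|.
Definition col_pos n (A : 'I_n -> 'I_n -> int) (j : 'I_n) := #|[set i | (0 < A i j)%R]|.
Definition col_neg n (A : 'I_n -> 'I_n -> int) (j : 'I_n) := #|[set i | (A i j < 0)%R]|.

Definition shiftable n (A : 'I_n -> 'I_n -> int) : Prop :=
  (forall i, row_pos A i = row_neg A i) /\ (forall j, col_pos A j = col_neg A j).

(* Main.v *)
Require Import Defs.
From HB Require Import structures.
From mathcomp Require Import all_boot all_order all_algebra all_fingroup.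
From mathcomp Require Import zify.
Import GRing.Theory Num.Theory.
Set Implicit Arguments.
Ltac ifs := repeat (case: ifP => [?|/negbT ?]). Unset Strict Implicit. Unset Printing Implicit Defensive.

Definition rr n (k0 k : 'I_n) : nat := (k + (n - k0)) %% n.

Lemma mod2n x n : x < 2 * n -> x %% n = if x < n then x else x - n.
Proof.
move=> h; case: ifP => hx; first by rewrite modn_small.
have -> : x = (x - n) + n by lia.
rewrite modnDr modn_small; lia.
Qed.

Lemma ordS_neq n (h : n != 1) (k : 'I_n) : ordS k != k.
Proof.
apply/eqP => /(congr1 val) /=.
have := ltn_ord k; case: (ltnP k.+1 n) => hk hn.
  by rewrite modn_small //; lia.
have -> : k.+1 = n by lia.
rewrite modnn => h0. move: h; lia.
Qed.

Lemma rr_lt n (k0 k : 'I_n) : rr k0 k < n.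
Proof. rewrite /rr ltn_mod; have := ltn_ord k; lia. Qed.

Lemma rr_eq0 n (k0 k : 'I_n) : (rr k0 k == 0) = (k == k0).
Proof.
rewrite /rr -val_eqE /=; have := ltn_ord k; have := ltn_ord k0 => h0 h1.
rewrite mod2n; last lia.
ifs; lia.
Qed.

Lemma rr_pred n (k0 k : 'I_n) :
  rr k0 (ord_pred k) = if k == k0 then n.-1 else (rr k0 k).-1.
Proof.
rewrite /rr /= modnDml -val_eqE /=; have := ltn_ord k; have := ltn_ord k0 => h0 h1.
have -> : (k + n).-1 + (n - k0) = (k + (n - k0)).-1 + n by lia.
rewrite modnDr !mod2n; try lia.
ifs; lia.
Qed.

Lemma rr_inj n (k0 : 'I_n) : injective (rr k0).
Proof.
move=> a b; rewrite /rr => /eqP; rewrite eqn_modDr => /eqP.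
rewrite !modn_small // => h; exact: val_inj.
Qed.

Lemma rr_perm n (k0 : 'I_n) : perm_eq [seq rr k0 k | k <- enum 'I_n] (iota 0 n).
Proof.
have U : uniq [seq rr k0 k | k <- enum 'I_n].
  by rewrite map_inj_uniq ?enum_uniq //; apply: rr_inj.
apply: uniq_perm => //; first exact: iota_uniq.
apply: (uniq_min_size U _ _).2.
  by move=> x /mapP [k _ ->]; rewrite mem_iota /= add0n rr_lt.
by rewrite size_iota size_map size_enum_ord.
Qed.

Lemma oddeven n : perm_eq ([seq 2 * x + 1 | x <- iota 0 n] ++ [seq 2 * x + 2 | x <- iota 0 n]) (iota 1 (2 * n)).
Proof.
elim: n => [|n IH] //.
rewrite -[n.+1]addn1 (iotaD 0 n 1) !map_cat /= add0n.
have -> : 2 * (n + 1) = 2 * n + 1 + 1 by lia.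
rewrite (iotaD 1 (2 * n + 1) 1) (iotaD 1 (2 * n) 1).
have -> : 1 + (2 * n + 1) = 2 * n + 2 by lia.
have -> : 1 + 2 * n = 2 * n + 1 by lia.
rewrite /= -catA -(catA _ _ [:: 2 * n + 2]).
rewrite perm_catCA perm_sym perm_catCA perm_sym perm_cat2l !catA perm_cat2r.
exact: IH.
Qed.

Local Open Scope ring_scope.

Definition cyc n (sg tu : {perm 'I_n}) (k0 : 'I_n) (e : int) (b : nat) (i j : 'I_n) : int :=
  if j == tu ((sg^-1)%g i) then e * Posz (b + 2 * rr k0 ((sg^-1)%g i) + 1)%N
  else if j == tu (ord_pred ((sg^-1)%g i)) then
    - (e * Posz (b + 2 * rr k0 (ord_pred ((sg^-1)%g i)) + 2)%N)
  else 0.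

Definition cycS n (sg tu : {perm 'I_n}) : {set cell n} :=
  [set (sg k, tu k) | k : 'I_n] :|: [set (sg (ordS k), tu k) | k : 'I_n].

Lemma mem_cycS n (sg tu : {perm 'I_n}) i j :
  ((i, j) \in cycS sg tu) = (j == tu ((sg^-1)%g i)) || (j == tu (ord_pred ((sg^-1)%g i))).
Proof.
rewrite inE; congr orb; apply/imsetP/eqP.
- by move=> [k _ [-> ->]]; rewrite permK.
- by move=> ->; exists ((sg^-1)%g i) => //; rewrite permKV.
- by move=> [k _ [-> ->]]; rewrite permK ordSK.
- by move=> ->; exists (ord_pred ((sg^-1)%g i)) => //; rewrite ord_predK permKV.
Qed.

Lemma pred_neq (n : nat) (h : n != 1%N) (k : 'I_n) : ord_pred k != k.
Proof.
apply/eqP => E; have := ordS_neq h (ord_pred k); by rewrite ord_predK E eqxx.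
Qed.

Lemma cyc_neq0 n (sg tu : {perm 'I_n}) k0 e b i j : e != 0 ->
  (cyc sg tu k0 e b i j != 0) = ((i, j) \in cycS sg tu).
Proof.
move=> e0; rewrite mem_cycS /cyc.
case: ifP => _; first by rewrite mulf_eq0 negb_or e0 /= -lt0n addn1.
case: ifP => _; last by rewrite eqxx.
by rewrite oppr_eq0 mulf_eq0 negb_or e0 /= -lt0n addn2.
Qed.

Lemma sum_if2 n (a c : 'I_n) (x y : int) : a != c ->
  \sum_(j < n) (if j == a then x else if j == c then y else 0) = x + y.
Proof.
move=> ac; rewrite (bigD1 a) //= eqxx (bigD1 c) /=; last by rewrite eq_sym.
rewrite eq_sym (negbTE ac) eqxx big1 ?addr0 // => j /andP [ja jc].
by rewrite (negbTE ja) (negbTE jc).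
Qed.

Lemma cyc_row (n : nat) (h : n != 1%N) (sg tu : {perm 'I_n}) k0 e b i :
  \sum_(j < n) cyc sg tu k0 e b i j =
  e * (if (sg^-1)%g i == k0 then 1 - Posz (2 * n)%N else 1).
Proof.
rewrite /cyc sum_if2; last by rewrite (inj_eq perm_inj) eq_sym pred_neq.
rewrite rr_pred -mulrN -mulrDr; congr (_ * _).
move: (rr_eq0 k0 ((sg^-1)%g i)) (ltn_ord ((sg^-1)%g i)).
case: ((sg^-1)%g i == k0) => hr hn; [|move/negbT: hr => hr]; lia.
Qed.

Lemma cyc_col (n : nat) (h : n != 1%N) (sg tu : {perm 'I_n}) k0 e b i j :
  cyc sg tu k0 e b i j =
  (let m := (tu^-1)%g j in
   if i == sg m then e * Posz (b + 2 * rr k0 m + 1)%N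
   else if i == sg (ordS m) then - (e * Posz (b + 2 * rr k0 m + 2)%N) else 0).
Proof.
rewrite /cyc /=; set m := (tu^-1)%g j.
have -> : j = tu m by rewrite /m permKV.
rewrite !(inj_eq perm_inj).
case: (eqVneq i (sg m)) => [->|im]; first by rewrite permK eqxx.
case: (eqVneq i (sg (ordS m))) => [->|im2].
  by rewrite permK eq_sym (negbTE (ordS_neq h m)) ordSK eqxx.
have -> : (m == (sg^-1)%g i) = false.
  rewrite eq_sym.
  by apply/negbTE; rewrite -(inj_eq (@perm_inj _ sg)) permKV.
have -> // : (m == ord_pred ((sg^-1)%g i)) = false.
rewrite eq_sym.
by apply/negbTE; rewrite -(inj_eq (@ordS_inj _)) ord_predK -(inj_eq (@perm_inj _ sg)) permKV.
Qed.

Lemma cyc_colsum (n : nat) (h : n != 1%N) (sg tu : {perm 'I_n}) k0 e b j :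
  \sum_(i < n) cyc sg tu k0 e b i j = - e.
Proof.
under eq_bigr do rewrite cyc_col //.
rewrite /= sum_if2; last by rewrite (inj_eq perm_inj) eq_sym ordS_neq.
rewrite -mulrN -mulrDr.
have -> : Posz (b + 2 * rr k0 ((tu^-1)%g j) + 1)%N - Posz (b + 2 * rr k0 ((tu^-1)%g j) + 2)%N = -1 by lia.
by rewrite mulrN1.
Qed.

Lemma mem_cycS_col n (sg tu : {perm 'I_n}) i j :
  ((i, j) \in cycS sg tu) = (i == sg ((tu^-1)%g j)) || (i == sg (ordS ((tu^-1)%g j))).
Proof.
rewrite inE; congr orb; apply/imsetP/eqP.
- by move=> [k _ [-> ->]]; rewrite permK.
- by move=> ->; exists ((tu^-1)%g j) => //; rewrite permKV.
- by move=> [k _ [-> ->]]; rewrite permK.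
- by move=> ->; exists ((tu^-1)%g j) => //; rewrite permKV.
Qed.

Lemma enum_cycS (n : nat) (h : n != 1%N) (sg tu : {perm 'I_n}) :
  perm_eq (enum (cycS sg tu))
    ([seq (sg k, tu k) | k <- enum 'I_n] ++ [seq (sg (ordS k), tu k) | k <- enum 'I_n]).
Proof.
apply: uniq_perm; first exact: enum_uniq.
  have iG : injective (fun k => (sg k, tu k)) by move=> a c [_ /perm_inj].
  have iH : injective (fun k => (sg (ordS k), tu k)) by move=> a c [_ /perm_inj].
  rewrite cat_uniq (map_inj_uniq iG) (map_inj_uniq iH) enum_uniq andbT /=.
  apply/hasPn => c /mapP [k _ ->]; apply/mapP => [[k' _ [E1 E2]]].
  move: E2 => /perm_inj E2; subst k'.
  by move: E1 => /perm_inj /eqP; rewrite (negbTE (ordS_neq h k)).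
move=> [i j]; rewrite mem_enum mem_cat /cycS inE.
congr orb; apply/imsetP/mapP => [[k _ E]|[k _ E]]; exists k => //; exact: mem_enum.
Qed.

Lemma vals_perm (n : nat) (k0 : 'I_n) (b : nat) :
  perm_eq ([seq (b + 2 * rr k0 k + 1)%N | k <- enum 'I_n] ++
           [seq (b + 2 * rr k0 k + 2)%N | k <- enum 'I_n])
          [seq (b + i)%N | i <- iota 1 (2 * n)].
Proof.
have -> : [seq (b + 2 * rr k0 k + 1)%N | k <- enum 'I_n] =
  map (addn b) (map (fun x => 2 * x + 1)%N (map (rr k0) (enum 'I_n))).
  by rewrite -!map_comp; apply: eq_map => k /=; rewrite addnA.
have -> : [seq (b + 2 * rr k0 k + 2)%N | k <- enum 'I_n] =
  map (addn b) (map (fun x => 2 * x + 2)%N (map (rr k0) (enum 'I_n))).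
  by rewrite -!map_comp; apply: eq_map => k /=; rewrite addnA.
rewrite -map_cat; apply: perm_map; apply: perm_trans (oddeven n).
by apply: perm_cat; apply: perm_map; apply: rr_perm.
Qed.

Lemma sgn_pos (a1 b1 a2 b2 : bool) (x1 y1 x2 y2 : nat) :
  (0 < x1)%N -> (0 < y1)%N -> (0 < x2)%N -> (0 < y2)%N ->
  ~~ ((a1 || b1) && (a2 || b2)) -> ~~ (a1 && b1) -> ~~ (a2 && b2) ->
  (0 < (if a1 then 1 * Posz x1 else if b1 then - (1 * Posz y1) else 0) +
       (if a2 then -1 * Posz x2 else if b2 then - (-1 * Posz y2) else 0)) = a1 || b2.
Proof.
move=> ? ? ? ?; case: a1 b1 a2 b2 => [] [] [] [] //= _ _ _; rewrite ?mul1r ?mulN1r ?opprK ?addr0 ?add0r; lia.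
Qed.

Lemma sgn_neg (a1 b1 a2 b2 : bool) (x1 y1 x2 y2 : nat) :
  (0 < x1)%N -> (0 < y1)%N -> (0 < x2)%N -> (0 < y2)%N ->
  ~~ ((a1 || b1) && (a2 || b2)) -> ~~ (a1 && b1) -> ~~ (a2 && b2) ->
  ((if a1 then 1 * Posz x1 else if b1 then - (1 * Posz y1) else 0) +
       (if a2 then -1 * Posz x2 else if b2 then - (-1 * Posz y2) else 0) < 0) = b1 || a2.
Proof.
move=> ? ? ? ?; case: a1 b1 a2 b2 => [] [] [] [] //= _ _ _; rewrite ?mul1r ?mulN1r ?opprK ?addr0 ?add0r; lia.
Qed.

Local Close Scope ring_scope.
Unset Implicit Arguments.

Theorem lemma2p3 (n : nat) (S1 S2 : {set cell n}) :
  hamilton_cycle S1 -> hamilton_cycle S2 -> [disjoint S1 & S2] ->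
  forall t s : nat, (0 < t)%N -> (0 < s)%N -> (t + 2 * n < s)%N ->
  exists A : 'I_n -> 'I_n -> int,
    (forall i j, ((i, j) \in S1 :|: S2) = (A i j != 0%R)) /\
    shiftable A /\
    perm_eq [seq absz (A c.1 c.2) | c <- enum (S1 :|: S2)]
            ([seq (s + i)%N | i <- iota 1 (2 * n)] ++ [seq (t + i)%N | i <- iota 1 (2 * n)]) /\
    (forall i : 'I_n, (\sum_(j < n) A i j)%R = 0%R) /\
    (forall j : 'I_n, (\sum_(i < n) A i j)%R = 0%R).
Proof.
Local Open Scope ring_scope.
move=> [sg1 [tu1 [E1 C1]]] [sg2 [tu2 [E2 C2]]] dis t s t0 s0 ts.
have {E1}E1 : S1 = cycS sg1 tu1 := E1.
have {E2}E2 : S2 = cycS sg2 tu2 := E2.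
case: n S1 S2 sg1 tu1 E1 C1 sg2 tu2 E2 C2 dis ts => [|n] S1 S2 sg1 tu1 E1 C1 sg2 tu2 E2 C2 dis ts.
  exists (fun _ _ => 0); split; first by case.
  split; first by split; case.
  split; last by split; case.
  by case: (enum (S1 :|: S2)) => [|[[m hm] j] l].
have h : n.+1 != 1%N.
  apply/eqP => n1; have := max_card S1; rewrite C1 card_prod card_ord n1 //.
set k02 := (sg2^-1)%g (sg1 ord0).
set c1 := cyc sg1 tu1 ord0 1 s.
set c2 := cyc sg2 tu2 k02 (-1) t.
have N1 i j : (c1 i j != 0) = ((i, j) \in S1) by rewrite E1 cyc_neq0.
have N2 i j : (c2 i j != 0) = ((i, j) \in S2) by rewrite E2 cyc_neq0 // oppr_eq0.
have D i j : ~~ (((i, j) \in S1) && ((i, j) \in S2)).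
  by apply/negP => /andP [a b]; rewrite (disjointFr dis a) in b.
have Z1 i j : (i, j) \in S1 -> c2 i j = 0.
  by move=> a; apply/eqP; rewrite -[_ == 0]negbK N2 (disjointFr dis a).
have Z2 i j : (i, j) \in S2 -> c1 i j = 0.
  by move=> a; apply/eqP; rewrite -[_ == 0]negbK N1 (disjointFl dis a).
exists (fun i j => c1 i j + c2 i j).
split.
  move=> i j; rewrite in_setU.
  case: (boolP ((i, j) \in S1)) => a /=.
    by rewrite Z1 // addr0 N1.
  case: (boolP ((i, j) \in S2)) => b /=.
    by rewrite Z2 // add0r N2.
  have -> : c1 i j = 0 by apply/eqP; rewrite -[_ == 0]negbK N1 (negbTE a).
  have -> : c2 i j = 0 by apply/eqP; rewrite -[_ == 0]negbK N2 (negbTE b).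
  by rewrite addr0 eqxx.
split.
  split => [i|j].
  - pose k1 := (sg1^-1)%g i; pose k2 := (sg2^-1)%g i.
    have Dj j : ~~ (((j == tu1 k1) || (j == tu1 (ord_pred k1))) &&
                   ((j == tu2 k2) || (j == tu2 (ord_pred k2)))).
      by have := D i j; rewrite E1 E2 !mem_cycS.
    have P1 j : ~~ ((j == tu1 k1) && (j == tu1 (ord_pred k1))).
      apply/negP => /andP [/eqP -> /eqP /perm_inj /eqP]; by rewrite eq_sym (negbTE (pred_neq h _)).
    have P2 j : ~~ ((j == tu2 k2) && (j == tu2 (ord_pred k2))).
      apply/negP => /andP [/eqP -> /eqP /perm_inj /eqP]; by rewrite eq_sym (negbTE (pred_neq h _)).
    have -> : row_pos (fun i j => c1 i j + c2 i j) i = #|[set tu1 k1; tu2 (ord_pred k2)]|.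
      rewrite /row_pos; apply: eq_card => j; rewrite !inE /c1 /c2 /cyc -/k1 -/k2.
      by rewrite sgn_pos ?addn1 ?addn2.
    have -> : row_neg (fun i j => c1 i j + c2 i j) i = #|[set tu1 (ord_pred k1); tu2 k2]|.
      rewrite /row_neg; apply: eq_card => j; rewrite !inE /c1 /c2 /cyc -/k1 -/k2.
      by rewrite sgn_neg ?addn1 ?addn2.
    rewrite !cards2.
    have := Dj (tu1 k1); have := Dj (tu1 (ord_pred k1)).
    by rewrite !eqxx !orbT /= !negb_or => /andP [-> _] /andP [_ ->].
  - pose m1 := (tu1^-1)%g j; pose m2 := (tu2^-1)%g j.
    have Di i : ~~ (((i == sg1 m1) || (i == sg1 (ordS m1))) &&
                   ((i == sg2 m2) || (i == sg2 (ordS m2)))).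
      by have := D i j; rewrite E1 E2 !mem_cycS_col.
    have P1 i : ~~ ((i == sg1 m1) && (i == sg1 (ordS m1))).
      apply/negP => /andP [/eqP -> /eqP /perm_inj /eqP]; by rewrite eq_sym (negbTE (ordS_neq h _)).
    have P2 i : ~~ ((i == sg2 m2) && (i == sg2 (ordS m2))).
      apply/negP => /andP [/eqP -> /eqP /perm_inj /eqP]; by rewrite eq_sym (negbTE (ordS_neq h _)).
    have -> : col_pos (fun i j => c1 i j + c2 i j) j = #|[set sg1 m1; sg2 (ordS m2)]|.
      rewrite /col_pos; apply: eq_card => i; rewrite !inE /c1 /c2 !cyc_col //= -/m1 -/m2.
      by rewrite sgn_pos ?addn1 ?addn2.
    have -> : col_neg (fun i j => c1 i j + c2 i j) j = #|[set sg1 (ordS m1); sg2 m2]|.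
      rewrite /col_neg; apply: eq_card => i; rewrite !inE /c1 /c2 !cyc_col //= -/m1 -/m2.
      by rewrite sgn_neg ?addn1 ?addn2.
    rewrite !cards2.
    have := Di (sg1 m1); have := Di (sg1 (ordS m1)).
    by rewrite !eqxx !orbT /= !negb_or => /andP [-> _] /andP [_ ->].
have P : perm_eq (enum (S1 :|: S2)) (enum S1 ++ enum S2).
  apply: uniq_perm; first exact: enum_uniq.
    rewrite cat_uniq !enum_uniq andbT /=; apply/hasPn => c; rewrite !mem_enum => cS2.
    apply/negP => cS1.
    by case: c cS1 cS2 => i j cS1 cS2; have := D i j; rewrite cS1 cS2.
  by move=> c; rewrite mem_cat !mem_enum in_setU.
split.
  apply: perm_trans (perm_map _ P) _; rewrite map_cat; apply: perm_cat.
  - have Q : perm_eq (enum S1) ([seq (sg1 k, tu1 k) | k <- enum 'I_n.+1] ++ [seq (sg1 (ordS k), tu1 k) | k <- enum 'I_n.+1]).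
      by rewrite E1; apply: enum_cycS.
    apply: perm_trans (perm_map _ Q) _.
    apply: (@eq_ind _ _ (fun X => perm_eq X _) (vals_perm ord0 s)).
    rewrite map_cat -!map_comp; congr (_ ++ _); apply: eq_map => k /=.
    + rewrite Z1; last by rewrite E1 mem_cycS permK eqxx.
      by rewrite addr0 /c1 /cyc permK eqxx mul1r.
    + rewrite Z1; last by rewrite E1 mem_cycS permK ordSK eqxx orbT.
      rewrite addr0 /c1 /cyc permK (inj_eq perm_inj) eq_sym (negbTE (ordS_neq h k)).
      by rewrite ordSK eqxx mul1r abszN.
  - have Q : perm_eq (enum S2) ([seq (sg2 k, tu2 k) | k <- enum 'I_n.+1] ++ [seq (sg2 (ordS k), tu2 k) | k <- enum 'I_n.+1]).
      by rewrite E2; apply: enum_cycS.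
    apply: perm_trans (perm_map _ Q) _.
    apply: (@eq_ind _ _ (fun X => perm_eq X _) (vals_perm k02 t)).
    rewrite map_cat -!map_comp; congr (_ ++ _); apply: eq_map => k /=.
    + rewrite Z2; last by rewrite E2 mem_cycS permK eqxx.
      by rewrite add0r /c2 /cyc permK eqxx mulN1r abszN.
    + rewrite Z2; last by rewrite E2 mem_cycS permK ordSK eqxx orbT.
      rewrite add0r /c2 /cyc permK (inj_eq perm_inj) eq_sym (negbTE (ordS_neq h k)).
      by rewrite ordSK eqxx mulN1r opprK.
split.
  move=> i; rewrite big_split /= /c1 /c2 !cyc_row //.
  have -> : ((sg2^-1)%g i == k02) = ((sg1^-1)%g i == ord0).
    by rewrite /k02 (inj_eq perm_inj) -[RHS](inj_eq (@perm_inj _ sg1)) permKV.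
  by rewrite mul1r mulN1r subrr.
by move=> j; rewrite big_split /= /c1 /c2 !cyc_colsum // opprK addNr.
Qed.
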